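(* Let $G$ be a finitely generated group satisfying the Morse local-to-global property. Then the Morse boundary $\partial_* G$ is strongly $\sigma$-compact.
   Context: A Morse gauge is a non-decreasing continuous function $M:\mathbb{R}_{\geq 1}\to\mathbb{R}_{\geq 0}$. A continuous map $\gamma:I\to X$ is a $Q$--quasi-geodesic ($Q\ge 1$) if $|t-s|/Q-Q\le d(\gamma(s),\gamma(t))\le Q|t-s|+Q$ for all $s,t\in I$. A quasi-geodesic $\gamma$ is $M$--Morse if every $Q$--quasi-geodesic with endpoints $\gamma(s),\gamma(t)$ lies in the closed $M(Q)$--neighbourhood of $\gamma[s,t]$; it is Morse if it is $M$--Morse for some Morse gauge $M$. For a proper geodesic metric space $X$ with basepoint $x_0$, the Morse boundary $\partial_*X$ is the set of Morse geodesic rays (based at $x_0$) up to bounded Hausdorff distance, with the topology of Cordes; for a Morse gauge $M$, the $M$--stratum $\partial^M_{x_0}X$ is the subset of classes represented by $M$--Morse geodesic rays starting at $x_0$. For a finitely generated group $G$, $\partial_*G$ is the Morse boundary of a Cayley graph (a quasi-isometry invariant). $\partial_*X$ is strongly $\sigma$-compact if there is an increasing sequence of Morse gauges $(M_n)_{n\in\mathbb{N}}$ with $\partial_*X=\bigcup_n\partial^{M_n}_{x_0}X$ and such that for every Morse gauge $M$ there is $n$ with $\partial^{M}_{x_0}X\subset\partial^{M_n}_{x_0}X$. A path $p:I\to X$ is $L$--locally an $M$--Morse $Q$--quasi-geodesic if for all $s,t\in I$ with $|t-s|\le L$ the subpath $p[s,t]$ is an $M$--Morse $Q$--quasi-geodesic.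 A space $X$ has the Morse local-to-global (MLTG) property if for every $Q\ge1$ and Morse gauge $M$ there exist a scale $L$, a constant $Q'\ge 1$ and a Morse gauge $M'$ such that every path that is $L$--locally an $M$--Morse $Q$--quasi-geodesic is an $M'$--Morse $Q'$--quasi-geodesic. A finitely generated group has the MLTG property if its Cayley graph with respect to a finite generating set does. *)

(* Defs.v *)
From Stdlib Require Import Reals Lra List Classical ClassicalEpsilon.
Open Scope R_scope.
Set Implicit Arguments.

Record group := Group {
  gT :> Type;
  gmul : gT -> gT -> gT;
  ginv : gT -> gT;
  gone : gT;
  gmulA : forall x y z, gmul x (gmul y z) = gmul (gmul x y) z;
  gmul1 : forall x, gmul gone x = x;
  gmulV : forall x, gmul (ginv x) x = gone
}.

Section Words.
Variable G : group.
Variable S : list G.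

Definition letter (x : G) : Prop := In x S \/ In (ginv G x) S.
Definition evalw (w : list G) : G := fold_right (gmul G) (gone G) w.

Definition generates : Prop :=
  forall g : G, exists w, Forall letter w /\ g = evalw w.

Definition wordle (a b : G) (n : nat) : Prop :=
  exists w, length w = n /\ Forall letter w /\ gmul G a (evalw w) = b.

Definition wdist (a b : G) : nat :=
  epsilon (inhabits 0%nat)
    (fun n => wordle a b n /\ forall m, wordle a b m -> (n <= m)%nat).
Definition dw (a b : G) : R := INR (wdist a b).

Definition adj (g h : G) : Prop :=
  g <> h /\ (In (gmul G (ginv G g) h) S \/ In (gmul G (ginv G h) g) S).

(* Geometric realisation of the Cayley graph: a vertex, or an interior
   point of the edge {g,h} at distance t from g.  The point Edge g h t
   and Edge h g (1-t) are the same point; this is encoded by their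
   distance being 0 (we work with the induced pseudometric, and all
   notions below only depend on distances). *)
Inductive cpt := Vert (g : G) | Edge (g h : G) (t : R).

Definition cwf (p : cpt) : Prop :=
  match p with
  | Vert _ => True
  | Edge g h t => adj g h /\ 0 < t < 1
  end.

Definition cay_pt := {p : cpt | cwf p}.

(* path metric of the metric graph with unit-length edges *)
Definition cay_d0 (p q : cpt) : R :=
  match p, q with
  | Vert g, Vert h => dw g h
  | Vert g, Edge h k u => Rmin (dw g h + u) (dw g k + (1 - u))
  | Edge g h t, Vert k => Rmin (t + dw g k) ((1 - t) + dw h k)
  | Edge g h t, Edge g' h' u =>
      let base := Rmin (Rmin (t + dw g g' + u) (t + dw g h' + (1 - u)))
                       (Rmin ((1 - t) + dw h g' + u) ((1 - t) + dw h h' + (1 - u))) in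
      if excluded_middle_informative (g = g' /\ h = h') then Rmin base (Rabs (t - u))
      else if excluded_middle_informative (g = h' /\ h = g') then Rmin base (Rabs (t - (1 - u)))
      else base
  end.

Definition cay_d (p q : cay_pt) : R := cay_d0 (proj1_sig p) (proj1_sig q).

Definition cay_base : cay_pt := exist cwf (Vert (gone G)) I.

End Words.

Section Morse.
Variable X : Type.
Variable d : X -> X -> R.

Definition interval (I : R -> Prop) : Prop :=
  forall a b c, I a -> I c -> a <= b <= c -> I b.

Definition cc (a b : R) : R -> Prop := fun x => a <= x <= b.
Definition ray_dom : R -> Prop := fun x => 0 <= x.

Definition cont_on (I : R -> Prop) (p : R -> X) : Prop :=
  forall t, I t -> forall eps, 0 < eps -> exists delta, 0 < delta /\
    forall s, I s -> Rabs (s - t) < delta -> d (p s) (p t) < eps.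

Definition qgeod (Q : R) (I : R -> Prop) (p : R -> X) : Prop :=
  1 <= Q /\ cont_on I p /\
  forall s t, I s -> I t ->
    Rabs (t - s) / Q - Q <= d (p s) (p t) <= Q * Rabs (t - s) + Q.

Definition morse_gauge (M : R -> R) : Prop :=
  (forall x y, 1 <= x -> x <= y -> M x <= M y) /\
  (forall x, 1 <= x -> 0 <= M x) /\
  (forall x, 1 <= x -> forall eps, 0 < eps -> exists delta, 0 < delta /\
     forall y, 1 <= y -> Rabs (y - x) < delta -> Rabs (M y - M x) < eps).

Definition morse_cond (M : R -> R) (I : R -> Prop) (gam : R -> X) : Prop :=
  forall s t, I s -> I t -> s <= t ->
  forall (Q a b : R) (sig : R -> X), a <= b -> qgeod Q (cc a b) sig ->
    d (sig a) (gam s) = 0 -> d (sig b) (gam t) = 0 ->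
    forall u, a <= u <= b ->
      forall eps, 0 < eps -> exists r, s <= r <= t /\ d (sig u) (gam r) <= M Q + eps.

Definition morse_qgeod (M : R -> R) (Q : R) (I : R -> Prop) (p : R -> X) : Prop :=
  qgeod Q I p /\ morse_cond M I p.

Definition locally_morse_qgeod (L : R) (M : R -> R) (Q : R) (I : R -> Prop)
    (p : R -> X) : Prop :=
  forall s t, I s -> I t -> s <= t -> t - s <= L -> morse_qgeod M Q (cc s t) p.

Definition MLTG : Prop :=
  forall (Q : R) (M : R -> R), 1 <= Q -> morse_gauge M ->
  exists (L Q' : R) (M' : R -> R), 0 < L /\ 1 <= Q' /\ morse_gauge M' /\
    forall (I : R -> Prop) (p : R -> X), interval I ->
      locally_morse_qgeod L M Q I p -> morse_qgeod M' Q' I p.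

Definition geod_ray (x0 : X) (gam : R -> X) : Prop :=
  d (gam 0) x0 = 0 /\
  forall s t, 0 <= s -> 0 <= t -> d (gam s) (gam t) = Rabs (t - s).

Definition morse_ray (x0 : X) (gam : R -> X) : Prop :=
  geod_ray x0 gam /\ exists M, morse_gauge M /\ morse_cond M ray_dom gam.

Definition bdd_hausdorff (g1 g2 : R -> X) : Prop :=
  exists C, (forall s, 0 <= s -> exists t, 0 <= t /\ d (g1 s) (g2 t) <= C) /\
            (forall t, 0 <= t -> exists s, 0 <= s /\ d (g1 s) (g2 t) <= C).

(* the class of gam lies in the M-stratum of the Morse boundary *)
Definition in_stratum (x0 : X) (M : R -> R) (gam : R -> X) : Prop :=
  exists gam', geod_ray x0 gam' /\ morse_cond M ray_dom gam' /\ bdd_hausdorff gam gam'.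

Definition strongly_sigma_compact (x0 : X) : Prop :=
  exists Ms : nat -> R -> R,
    (forall n, morse_gauge (Ms n)) /\
    (forall n x, 1 <= x -> Ms n x <= Ms (S n) x) /\
    (forall gam, morse_ray x0 gam -> exists n, in_stratum x0 (Ms n) gam) /\
    (forall M, morse_gauge M -> exists n, forall gam, morse_ray x0 gam ->
        in_stratum x0 M gam -> in_stratum x0 (Ms n) gam).

End Morse.

(* Main.v *)
Require Import Defs.
From Stdlib Require Import Reals List Lra Lia Classical ClassicalEpsilon ZArith.
From mathcomp Require ssreflect ssrbool eqtype ssrnat seq choice.
Unset Asymmetric Patterns.

Module Enc.
Import ssreflect ssrbool eqtype ssrnat seq choice.
Definition J := (nat * seq (seq nat))%type.
Definition dec (n : nat) : J := match unpickle n with Some j => j | None => (0%nat, [::]) end.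
Lemma dec_surj (j : J) : exists n, dec n = j.
Proof. exists (pickle j). by rewrite /dec pickleK. Qed.
End Enc.

Open Scope R_scope.

Section Grp.
Variable G : group.
Local Notation m := (gmul G).
Local Notation inv := (ginv G).
Local Notation e := (gone G).

Lemma g_lcancel (x y z : G) : m x y = m x z -> y = z.
Proof. intro H. rewrite <- (gmul1 G y), <- (gmul1 G z), <- (gmulV G x), <- !gmulA, H. reflexivity. Qed.

Lemma g_mul1r (x : G) : m x e = x.
Proof. apply (g_lcancel (inv x)). rewrite gmulA, gmulV, gmul1. reflexivity. Qed.

Lemma g_mulV (x : G) : m x (inv x) = e.
Proof. apply (g_lcancel (inv x)). rewrite gmulA, gmulV, gmul1, g_mul1r. reflexivity. Qed.

Lemma g_invK (x : G) : inv (inv x) = x.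
Proof. apply (g_lcancel (inv x)). rewrite gmulV, g_mulV. reflexivity. Qed.

Lemma g_inv_uniq (a b : G) : m a b = e -> a = inv b.
Proof. intro H. rewrite <- (g_mul1r a), <- (g_mulV b), gmulA, H, gmul1. reflexivity. Qed.

Lemma g_invM (x y : G) : inv (m x y) = m (inv y) (inv x).
Proof. symmetry. apply g_inv_uniq. rewrite gmulA, <- (gmulA _ (inv y)), gmulV, g_mul1r, gmulV. reflexivity. Qed.

Lemma g_transl (x g h : G) : m (inv (m x g)) (m x h) = m (inv g) h.
Proof. rewrite g_invM, <- gmulA, (gmulA _ (inv x)), gmulV, gmul1. reflexivity. Qed.

Lemma g_solve (v w l : G) : m (inv v) w = l -> w = m v l.
Proof. intro H. rewrite <- H, gmulA, g_mulV, gmul1. reflexivity. Qed.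

Lemma g_inv_cancel (x g : G) : m x (m (inv x) g) = g.
Proof. rewrite gmulA, g_mulV, gmul1. reflexivity. Qed.
Lemma g_cancel_inv (x g : G) : m (inv x) (m x g) = g.
Proof. rewrite gmulA, gmulV, gmul1. reflexivity. Qed.
End Grp.

Lemma least_exists (P : nat -> Prop) : (exists n, P n) -> exists n, P n /\ forall k, P k -> (n <= k)%nat.
Proof.
  intros [n Hn]. apply NNPP. intro Hno.
  assert (forall j, forall i, (i <= j)%nat -> ~ P i).
  { induction j; intros i Hi HP.
    - apply Hno. exists i. split; auto. intros k _. lia.
    - destruct (Nat.eq_dec i (S j)).
      + subst. apply Hno. exists (S j). split; auto. intros k Hk.
        destruct (Nat.le_gt_cases (S j) k); auto. exfalso. apply (IHj k); auto; lia.
      + apply (IHj i); auto; lia. }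
  apply (H n n); auto.
Qed.


Section Words2.
Variable G : group.
Variable S : list G.
Hypothesis Hgen : generates G S.
Local Notation m := (gmul G).
Local Notation inv := (ginv G).
Local Notation e := (gone G).

Lemma wordle_ex (a b : G) : exists n, wordle G S a b n.
Proof.
  destruct (Hgen (m (inv a) b)) as [w [Hw Hev]]. exists (length w), w. repeat split; auto.
  rewrite <- Hev. apply g_inv_cancel.
Qed.

Lemma wdist_spec (a b : G) : wordle G S a b (wdist G S a b) /\ forall k, wordle G S a b k -> (wdist G S a b <= k)%nat.
Proof.
  unfold wdist. apply epsilon_spec. apply least_exists. apply wordle_ex.
Qed.

Lemma wordle_transl (x a b : G) n : wordle G S (m x a) (m x b) n <-> wordle G S a b n.
Proof.
  split; intros [w [H1 [H2 H3]]]; exists w; repeat split; auto.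
  - apply (g_lcancel G x). rewrite gmulA. exact H3.
  - rewrite <- gmulA, H3. reflexivity.
Qed.

Lemma wdist_transl (x a b : G) : wdist G S (m x a) (m x b) = wdist G S a b.
Proof.
  destruct (wdist_spec a b) as [A1 A2]. destruct (wdist_spec (m x a) (m x b)) as [B1 B2].
  apply Nat.le_antisymm.
  - apply B2. apply wordle_transl. exact A1.
  - apply A2. apply wordle_transl in B1. exact B1.
Qed.

Lemma dw_transl (x a b : G) : dw G S (m x a) (m x b) = dw G S a b.
Proof. unfold dw. rewrite wdist_transl. reflexivity. Qed.

Lemma dw_refl (a : G) : dw G S a a = 0.
Proof.
  unfold dw. destruct (wdist_spec a a) as [_ A2].
  assert (wdist G S a a = 0%nat).
  { apply Nat.le_0_r. apply A2. exists nil. simpl. repeat split; auto. apply g_mul1r. }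
  rewrite H. reflexivity.
Qed.

Lemma dw_eq0 (a b : G) : dw G S a b = 0 -> a = b.
Proof.
  unfold dw. intro H. replace 0 with (INR 0) in H by reflexivity. apply INR_eq in H.
  destruct (wdist_spec a b) as [[w [H1 [H2 H3]]] _]. rewrite H in H1.
  destruct w; [|discriminate]. simpl in H3. rewrite g_mul1r in H3. exact H3.
Qed.

Lemma dw_one (a b : G) : dw G S a b = 1 -> letter G S (m (inv a) b) /\ a <> b.
Proof.
  intro H0. assert (NE : a <> b). { intro E. subst. rewrite dw_refl in H0. lra. }
  unfold dw in H0. replace 1 with (INR 1) in H0 by reflexivity. apply INR_eq in H0.
  destruct (wdist_spec a b) as [[w [H1 [H2 H3]]] _]. rewrite H0 in H1.
  destruct w as [|l [|]]; try discriminate. simpl in H3. rewrite g_mul1r in H3.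
  inversion H2; subst. split; auto.
  rewrite g_cancel_inv. assumption.
Qed.

Lemma dw_nat (a b : G) : exists k, dw G S a b = INR k.
Proof. exists (wdist G S a b). reflexivity. Qed.
End Words2.

Section Geo.
Variable G : group.
Variable S : list G.
Hypothesis Hgen : generates G S.
Local Notation m := (gmul G).
Local Notation inv := (ginv G).
Local Notation e := (gone G).
Local Notation d0 := (cay_d0 S).

Definition Tc (x : G) (p : cpt G) : cpt G :=
  match p with Vert _ g => Vert G (m x g) | Edge _ g h t => Edge G (m x g) (m x h) t end.

Definition flip (p : cpt G) : cpt G :=
  match p with Vert _ g => Vert G g | Edge _ g h t => Edge G h g (1 - t) end.

Lemma mx_iff (x a b : G) : m x a = m x b <-> a = b.
Proof. split; intro H. - apply (g_lcancel G x); auto. - subst; auto. Qed.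

Ltac split_emi :=
  repeat match goal with |- context [excluded_middle_informative ?P] =>
    destruct (excluded_middle_informative P) end.

Lemma Tc_isom (x : G) (p q : cpt G) : d0 (Tc x p) (Tc x q) = d0 p q.
Proof.
  destruct p as [g|g h t]; destruct q as [g'|g' h' u]; simpl; rewrite ?(dw_transl G S Hgen); auto.
  split_emi; auto; exfalso; rewrite ?mx_iff in *; tauto.
Qed.

Lemma Tc_inv (x : G) (p : cpt G) : Tc x (Tc (inv x) p) = p.
Proof. destruct p; simpl; rewrite ?g_inv_cancel; reflexivity. Qed.

Lemma Rmin_comm' (a b : R) : Rmin a b = Rmin b a.
Proof. apply Rmin_comm. Qed.

Lemma flip_inv (p : cpt G) (g h : G) (u : R) : g <> h -> d0 p (Edge G h g (1 - u)) = d0 p (Edge G g h u).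
Proof.
  intro Hgh.
  destruct p as [a|a b t]; simpl.
  - replace (1 - (1 - u)) with u by ring. apply Rmin_comm.
  - replace (1 - (1 - u)) with u by ring.
    assert (Hb : forall w x y z : R, Rmin (Rmin w x) (Rmin y z) = Rmin (Rmin x w) (Rmin z y)).
    { intros. rewrite (Rmin_comm w), (Rmin_comm y). reflexivity. }
    rewrite (Hb (t + _ + _)).
    split_emi; try reflexivity; exfalso.
    all: repeat match goal with H : _ /\ _ |- _ => destruct H end; subst.
    all: try congruence.
    all: match goal with H : ~ (_ /\ _) |- _ => apply H; split; reflexivity end.
Qed.

Lemma Tc_wf (x : G) (p : cpt G) : cwf S p -> cwf S (Tc x p).
Proof.
  destruct p as [g|g h t]; simpl; auto. intros [[Hne Hin] Ht]. split; auto. split.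
  - intro E. apply Hne. apply (g_lcancel G x). exact E.
  - rewrite !g_transl. exact Hin.
Qed.

Definition Tp (x : G) (p : cay_pt G S) : cay_pt G S :=
  exist (cwf S) (Tc x (proj1_sig p)) (Tc_wf x (proj1_sig p) (proj2_sig p)).

Lemma dw_cases (a b : G) : dw G S a b = 0 \/ 1 <= dw G S a b.
Proof.
  unfold dw. destruct (wdist G S a b) as [|k]; [left; reflexivity|right].
  rewrite S_INR. pose proof (pos_INR k). lra.
Qed.

Lemma dw_ge0 (a b : G) : 0 <= dw G S a b.
Proof. apply pos_INR. Qed.

Lemma Rmin_split (a b c : R) : Rmin a b = c -> (a = c /\ a <= b) \/ (b = c /\ b <= a).
Proof. unfold Rmin. destruct (Rle_dec a b); [left|right]; split; auto; lra. Qed.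

Definition cp (a b : G) (u : R) : cpt G :=
  if Req_EM_T u 0 then Vert G a else if Req_EM_T u 1 then Vert G b else Edge G a b u.

Lemma Tc_cp (x a b : G) (u : R) : Tc x (cp a b u) = cp (m x a) (m x b) u.
Proof. unfold cp. destruct (Req_EM_T u 0); [reflexivity|]. destruct (Req_EM_T u 1); reflexivity. Qed.

Definition vt (p : cay_pt G S) : G :=
  match proj1_sig p with Vert _ g => g | Edge _ g _ _ => g end.

Section Ray.
Variable gam : R -> cay_pt G S.
Hypothesis Hgam : geod_ray (@cay_d G S) (cay_base G S) gam.

Lemma gr_dist (s t : R) : 0 <= s -> 0 <= t -> d0 (proj1_sig (gam s)) (proj1_sig (gam t)) = Rabs (t - s).
Proof. intros. apply (proj2 Hgam); auto. Qed.

Lemma gr_vert0 : exists g, proj1_sig (gam 0) = Vert G g.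
Proof.
  destruct Hgam as [H0 _]. unfold cay_d, cay_base in H0. simpl in H0.
  destruct (gam 0) as [p wf]. simpl in *. destruct p as [g|a b t]; [exists g; auto|].
  exfalso. destruct wf as [_ Ht]. simpl in H0.
  pose proof (dw_ge0 a (gone G)). pose proof (dw_ge0 b (gone G)).
  apply Rmin_split in H0. lra.
Qed.

Lemma nat_not_frac (a n : nat) (v : R) : 0 < v < 1 -> INR a + v <> INR n.
Proof.
  intros Hv E. destruct (Nat.lt_ge_cases a n) as [H|H].
  - assert (INR (Datatypes.S a) <= INR n) by (apply le_INR; lia). rewrite S_INR in H0. lra.
  - apply le_INR in H. lra.
Qed.

Lemma gr_vert (n : nat) : exists g, proj1_sig (gam (INR n)) = Vert G g.
Proof.
  destruct gr_vert0 as [g0 Hg0].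
  pose proof (gr_dist 0 (INR n) (Rle_refl 0) (pos_INR n)) as D.
  rewrite Rminus_0_r, Rabs_pos_eq in D by apply pos_INR. rewrite Hg0 in D.
  destruct (gam (INR n)) as [p wf]. simpl in *. destruct p as [g|a b t]; [exists g; auto|].
  exfalso. destruct wf as [_ Ht]. simpl in D. apply Rmin_split in D.
  destruct D as [[D _]|[D _]].
  - apply (nat_not_frac (wdist G S g0 a) n t); auto.
  - apply (nat_not_frac (wdist G S g0 b) n (1 - t)); auto. lra.
Qed.

Lemma gr_vt (n : nat) : proj1_sig (gam (INR n)) = Vert G (vt (gam (INR n))).
Proof. destruct (gr_vert n) as [g Hg]. unfold vt. rewrite Hg. reflexivity. Qed.

Lemma gr_step (n : nat) : dw G S (vt (gam (INR n))) (vt (gam (INR (Datatypes.S n)))) = 1.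
Proof.
  pose proof (gr_dist (INR n) (INR (Datatypes.S n)) (pos_INR n) (pos_INR _)) as D.
  rewrite (gr_vt n), (gr_vt (Datatypes.S n)) in D. transitivity (Rabs (INR (Datatypes.S n) - INR n)); [exact D|].
  rewrite S_INR.
  replace (INR n + 1 - INR n) with 1 by ring. apply Rabs_pos_eq. lra.
Qed.

Lemma gr_cp (n : nat) (u : R) : 0 <= u <= 1 -> forall P,
  d0 P (proj1_sig (gam (INR n + u))) = d0 P (cp (vt (gam (INR n))) (vt (gam (INR (Datatypes.S n)))) u).
Proof.
  intros Hu P. unfold cp.
  destruct (Req_EM_T u 0) as [E0|N0].
  { subst. rewrite Rplus_0_r, gr_vt. reflexivity. }
  destruct (Req_EM_T u 1) as [E1|N1].
  { subst. rewrite <- S_INR, gr_vt. reflexivity. }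
  assert (Hu' : 0 < u < 1) by lra.
  set (v := vt (gam (INR n))). set (v' := vt (gam (INR (Datatypes.S n)))).
  pose proof (gr_step n) as St. fold v v' in St.
  pose proof (gr_dist (INR n) (INR n + u) (pos_INR n) ltac:(pose proof (pos_INR n); lra)) as D1.
  pose proof (gr_dist (INR n + u) (INR (Datatypes.S n)) ltac:(pose proof (pos_INR n); lra) (pos_INR _)) as D2.
  rewrite gr_vt in D1. rewrite gr_vt in D2. fold v in D1. fold v' in D2.
  rewrite S_INR in D2.
  replace (INR n + u - INR n) with u in D1 by ring.
  replace (INR n + 1 - (INR n + u)) with (1 - u) in D2 by ring.
  rewrite Rabs_pos_eq in D1 by lra. rewrite Rabs_pos_eq in D2 by lra.
  destruct (gam (INR n + u)) as [p wf]. simpl in *.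
  destruct p as [a|a b w].
  - exfalso. simpl in D1. destruct (dw_cases v a); lra.
  - destruct wf as [_ Hw]. simpl in D1, D2.
    pose proof (dw_ge0 v a). pose proof (dw_ge0 v b). pose proof (dw_ge0 a v'). pose proof (dw_ge0 b v').
    apply Rmin_split in D1. destruct D1 as [[D1 _]|[D1 _]].
    + assert (Ea : dw G S v a = 0) by (destruct (dw_cases v a); lra).
      apply (dw_eq0 G S Hgen) in Ea. subst a.
      assert (w = u) by (rewrite dw_refl in D1 by exact Hgen; lra). subst w.
      rewrite St in D2. apply Rmin_split in D2. destruct D2 as [[D2 _]|[D2 _]].
      * exfalso. lra.
      * assert (Eb : dw G S b v' = 0) by lra. apply (dw_eq0 G S Hgen) in Eb. subst b. reflexivity.
    + assert (Eb : dw G S v b = 0) by (destruct (dw_cases v b); lra).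
      apply (dw_eq0 G S Hgen) in Eb. subst b.
      assert (w = 1 - u) by (rewrite dw_refl in D1 by exact Hgen; lra). subst w.
      rewrite St in D2. apply Rmin_split in D2. destruct D2 as [[D2 _]|[D2 _]].
      * assert (Ea : dw G S a v' = 0) by lra. apply (dw_eq0 G S Hgen) in Ea. subst a.
        apply flip_inv. apply (dw_one G S Hgen v v' St).
      * exfalso. lra.
Qed.
End Ray.
End Geo.

Section Code.
Variable G : group.
Variable S : list G.
Hypothesis Hgen : generates G S.
Local Notation m := (gmul G).
Local Notation inv := (ginv G).
Local Notation e := (gone G).
Local Notation d0 := (cay_d0 S).

Definition letter_at (i : nat) : G :=
  if Nat.ltb i (length S) then nth i S e else inv (nth (i - length S) S e).

Definition code (l : G) : nat :=
  epsilon (inhabits 0%nat) (fun i => (i < 2 * length S)%nat /\ letter_at i = l).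

Lemma code_spec (l : G) : letter G S l -> (code l < 2 * length S)%nat /\ letter_at (code l) = l.
Proof.
  intro H. unfold code. apply epsilon_spec. destruct H as [H|H].
  - destruct (In_nth S l e H) as [i [Hi Hn]]. exists i. split; [lia|].
    unfold letter_at. replace (Nat.ltb i (length S)) with true by (symmetry; apply Nat.ltb_lt; auto). auto.
  - destruct (In_nth S (inv l) e H) as [i [Hi Hn]]. exists (length S + i)%nat. split; [lia|].
    unfold letter_at. replace (Nat.ltb (length S + i) (length S)) with false by (symmetry; apply Nat.ltb_ge; lia).
    replace (length S + i - length S)%nat with i by lia. rewrite Hn. apply g_invK.
Qed.

Lemma code_inj (l l' : G) : letter G S l -> letter G S l' -> code l = code l' -> l = l'.
Proof.
  intros H H' E. destruct (code_spec l H) as [_ A]. destruct (code_spec l' H') as [_ A'].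
  rewrite <- A, <- A', E. reflexivity.
Qed.

Fixpoint all_codes (B k : nat) : list (list nat) :=
  match k with
  | O => nil :: nil
  | Datatypes.S k => flat_map (fun c => map (cons c) (all_codes B k)) (seq 0 B)
  end.

Lemma all_codes_in (B k : nat) (l : list nat) :
  length l = k -> (forall c, In c l -> (c < B)%nat) -> In l (all_codes B k).
Proof.
  revert l. induction k; intros l Hl Hc.
  - destruct l; [left; auto | discriminate].
  - destruct l as [|c l]; [discriminate|]. simpl. apply in_flat_map. exists c. split.
    + apply in_seq. assert (c < B)%nat by (apply Hc; left; auto). lia.
    + apply in_map. apply IHk; auto. intros. apply Hc. right; auto.
Qed.

Definition wtype (gam : R -> cay_pt G S) (n k : nat) : list nat :=
  map (fun i => code (m (inv (vt G S (gam (INR (n + i))))) (vt G S (gam (INR (Datatypes.S (n + i)))))))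
      (seq 0 k).

Section W.
Variable gam : R -> cay_pt G S.
Hypothesis Hgam : geod_ray (@cay_d G S) (cay_base G S) gam.

Lemma step_letter (n : nat) : letter G S (m (inv (vt G S (gam (INR n)))) (vt G S (gam (INR (Datatypes.S n))))).
Proof. apply (dw_one G S Hgen). apply (gr_step G S gam Hgam). Qed.

Lemma wtype_in (n k : nat) : In (wtype gam n k) (all_codes (2 * length S) k).
Proof.
  apply all_codes_in.
  - unfold wtype. rewrite length_map, length_seq. reflexivity.
  - intros c Hc. unfold wtype in Hc. apply in_map_iff in Hc. destruct Hc as [i [<- _]].
    apply code_spec. apply step_letter.
Qed.
End W.

Lemma window_vt (gam gam2 : R -> cay_pt G S) (n n' k : nat) :
  geod_ray (@cay_d G S) (cay_base G S) gam -> geod_ray (@cay_d G S) (cay_base G S) gam2 ->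
  wtype gam n k = wtype gam2 n' k ->
  forall i, (i <= k)%nat ->
  vt G S (gam (INR (n + i))) = m (m (vt G S (gam (INR n))) (inv (vt G S (gam2 (INR n'))))) (vt G S (gam2 (INR (n' + i)))).
Proof.
  intros H1 H2 W. unfold wtype in W. rewrite map_ext_in_iff in W.
  induction i; intro Hi.
  - rewrite !Nat.add_0_r, <- gmulA, gmulV, g_mul1r. reflexivity.
  - assert (E := W i ltac:(apply in_seq; lia)). cbv beta in E.
    apply code_inj in E; [| apply step_letter; auto | apply step_letter; auto].
    rewrite !Nat.add_succ_r.
    apply g_solve in E. rewrite E. rewrite IHi by lia.
    rewrite <- (gmulA _ _ _ (m (inv _) _)). f_equal.
    apply g_inv_cancel.
Qed.
End Code.

Lemma qgeod_ext (X : Type) (d : X -> X -> R) (Q : R) (I : R -> Prop) (f g : R -> X) :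
  (forall s t, d (f s) (f t) = d (g s) (g t)) -> qgeod d Q I g -> qgeod d Q I f.
Proof.
  intros E [H1 [H2 H3]]. split; [auto|split].
  - intros t It eps Heps. destruct (H2 t It eps Heps) as [dl [Hdl Hd]]. exists dl. split; auto.
    intros s Is Hs. rewrite E. auto.
  - intros s t Is It. rewrite E. auto.
Qed.

Lemma find_i (k : nat) (w : R) : 0 <= w <= INR (Datatypes.S k) -> exists i, (i <= k)%nat /\ INR i <= w <= INR i + 1.
Proof.
  induction k; intro Hw.
  - exists 0%nat. simpl in *. split; [lia|lra].
  - destruct (Rle_dec w (INR (Datatypes.S k))) as [Hl|Hl].
    + destruct IHk as [i [Hi Hi']]; [lra|]. exists i. split; [lia|auto].
    + exists (Datatypes.S k). split; [lia|]. apply Rnot_le_lt in Hl. rewrite (S_INR (Datatypes.S k)) in Hw. lra.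
Qed.

Section Trans.
Variable G : group.
Variable S : list G.
Hypothesis Hgen : generates G S.
Local Notation m := (gmul G).
Local Notation inv := (ginv G).
Local Notation d0 := (cay_d0 S).

Lemma window_d (gam gam2 : R -> cay_pt G S) (n n' k : nat) :
  geod_ray (@cay_d G S) (cay_base G S) gam -> geod_ray (@cay_d G S) (cay_base G S) gam2 ->
  wtype G S gam n (Datatypes.S k) = wtype G S gam2 n' (Datatypes.S k) ->
  forall w, 0 <= w <= INR (Datatypes.S k) -> forall P,
  d0 P (proj1_sig (gam (INR n + w))) =
  d0 (Tc G (inv (m (vt G S (gam (INR n))) (inv (vt G S (gam2 (INR n')))))) P) (proj1_sig (gam2 (INR n' + w))).
Proof.
  intros H1 H2 W w Hw P.
  set (x := m (vt G S (gam (INR n))) (inv (vt G S (gam2 (INR n'))))).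
  destruct (find_i k w Hw) as [i [Hi Hi']].
  set (u := w - INR i).
  replace (INR n + w) with (INR (n + i) + u) by (unfold u; rewrite plus_INR; ring).
  replace (INR n' + w) with (INR (n' + i) + u) by (unfold u; rewrite plus_INR; ring).
  rewrite (gr_cp G S Hgen gam H1 (n + i) u) by (unfold u; lra).
  rewrite (gr_cp G S Hgen gam2 H2 (n' + i) u) by (unfold u; lra).
  rewrite <- (Tc_isom G S Hgen x (Tc G (inv x) P)), Tc_inv, Tc_cp.
  pose proof (window_vt G S Hgen gam gam2 n n' (Datatypes.S k) H1 H2 W i ltac:(lia)) as V1.
  pose proof (window_vt G S Hgen gam gam2 n n' (Datatypes.S k) H1 H2 W (Datatypes.S i) ltac:(lia)) as V2.
  rewrite !Nat.add_succ_r in V2. fold x in V1, V2. rewrite V1, V2. reflexivity.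
Qed.

Lemma morse_transfer (M : R -> R) (gam gam2 : R -> cay_pt G S) (x : G) (c lo hi : R) :
  (forall w, lo <= w <= hi -> forall P, d0 P (proj1_sig (gam w)) = d0 (Tc G (inv x) P) (proj1_sig (gam2 (w + c)))) ->
  0 <= lo + c -> morse_cond (@cay_d G S) M ray_dom gam2 ->
  forall s t, lo <= s -> t <= hi -> morse_cond (@cay_d G S) M (cc s t) gam.
Proof.
  intros H Hc HM s t Hs Ht s1 t1 Hs1 Ht1 Hst Q a b sig Hab Hq Ha Hb u Hu eps Heps.
  unfold cc in Hs1, Ht1.
  set (sig' := fun v => Tp G S (inv x) (sig v)).
  assert (Hq' : qgeod (@cay_d G S) Q (cc a b) sig').
  { apply (qgeod_ext _ _ _ _ sig' sig); auto. intros p q. unfold sig', cay_d, Tp. simpl.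
    apply Tc_isom; auto. }
  assert (Ha' : cay_d (sig' a) (gam2 (s1 + c)) = 0).
  { unfold cay_d, sig', Tp. simpl. rewrite <- H by lra. exact Ha. }
  assert (Hb' : cay_d (sig' b) (gam2 (t1 + c)) = 0).
  { unfold cay_d, sig', Tp. simpl. rewrite <- H by lra. exact Hb. }
  destruct (HM (s1 + c) (t1 + c) ltac:(unfold ray_dom; lra) ltac:(unfold ray_dom; lra)
              ltac:(lra) Q a b sig' Hab Hq' Ha' Hb' u Hu eps Heps) as [r [Hr Hd]].
  exists (r - c). split; [lra|].
  unfold cay_d. rewrite (H (r - c)) by lra. replace (r - c + c) with r by ring. exact Hd.
Qed.

Lemma gr_qgeod1 (gam : R -> cay_pt G S) (s t : R) :
  geod_ray (@cay_d G S) (cay_base G S) gam -> 0 <= s -> qgeod (@cay_d G S) 1 (cc s t) gam.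
Proof.
  intros [_ Hg] Hs. unfold cc. split; [lra|split].
  - intros t0 It eps Heps. exists eps. split; auto. intros s0 Is Hs0.
    rewrite Hg by lra. rewrite Rabs_minus_sym. exact Hs0.
  - intros s0 t0 Is It. rewrite Hg by lra. pose proof (Rabs_pos (t0 - s0)). split.
    + unfold Rdiv. rewrite Rinv_1, Rmult_1_r. lra.
    + lra.
Qed.
End Trans.

Lemma floor_nat (s : R) : 0 <= s -> exists n : nat, INR n <= s < INR n + 1.
Proof.
  intro Hs. destruct (base_Int_part s) as [B1 B2].
  assert (Hz : (0 <= Int_part s)%Z).
  { assert (-1 < Int_part s)%Z by (apply lt_IZR; lra). lia. }
  exists (Z.to_nat (Int_part s)). rewrite INR_IZR_INZ, Z2Nat.id by exact Hz. lra.
Qed.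

Lemma Rmax_close (a b c d eps : R) : Rabs (a - c) < eps -> Rabs (b - d) < eps -> Rabs (Rmax a b - Rmax c d) < eps.
Proof.
  intros H1 H2. apply Rabs_def2 in H1. apply Rabs_def2 in H2.
  unfold Rmax. destruct (Rle_dec a b); destruct (Rle_dec c d); apply Rabs_def1; lra.
Qed.

Lemma gauge_zero : morse_gauge (fun _ => 0).
Proof.
  split; [|split].
  - intros; lra.
  - intros; lra.
  - intros x _ eps Heps. exists 1. split; [lra|]. intros. rewrite Rminus_0_r, Rabs_R0. exact Heps.
Qed.

Lemma gauge_max (M1 M2 : R -> R) : morse_gauge M1 -> morse_gauge M2 -> morse_gauge (fun x => Rmax (M1 x) (M2 x)).
Proof.
  intros [A1 [B1 C1]] [A2 [B2 C2]]. split; [|split].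
  - intros x y Hx Hxy. pose proof (A1 x y Hx Hxy). pose proof (A2 x y Hx Hxy).
    unfold Rmax. destruct (Rle_dec (M1 x) (M2 x)); destruct (Rle_dec (M1 y) (M2 y)); lra.
  - intros x Hx. pose proof (B1 x Hx). unfold Rmax. destruct (Rle_dec (M1 x) (M2 x)); lra.
  - intros x Hx eps Heps. destruct (C1 x Hx eps Heps) as [d1 [Hd1 D1]]. destruct (C2 x Hx eps Heps) as [d2 [Hd2 D2]].
    exists (Rmin d1 d2). split; [apply Rmin_pos; auto|]. intros y Hy Hyx.
    apply Rmax_close.
    + apply D1; auto. pose proof (Rmin_l d1 d2). lra.
    + apply D2; auto. pose proof (Rmin_r d1 d2). lra.
Qed.

Lemma morse_mono (X : Type) (d : X -> X -> R) (M1 M2 : R -> R) (I : R -> Prop) (gam : R -> X) :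
  (forall x, M1 x <= M2 x) -> morse_cond d M1 I gam -> morse_cond d M2 I gam.
Proof.
  intros Hle H s t Is It Hst Q a b sig Hab Hq Ha Hb u Hu eps Heps.
  destruct (H s t Is It Hst Q a b sig Hab Hq Ha Hb u Hu eps Heps) as [r [Hr Hd]].
  exists r. split; auto. pose proof (Hle Q). lra.
Qed.

Section Main.
Variable G : group.
Variable S : list G.
Local Notation m := (gmul G).
Local Notation inv := (ginv G).
Local Notation dd := (@cay_d G S).
Local Notation x0 := (cay_base G S).

Definition Phi (j : nat * list (list nat)) (gam : R -> cay_pt G S) : Prop :=
  forall n : nat, In (wtype G S gam n (fst j)) (snd j).
Definition Good (j : nat * list (list nat)) (N : R -> R) : Prop :=
  morse_gauge N /\ forall gam, geod_ray dd x0 gam -> Phi j gam -> morse_cond dd N ray_dom gam.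
Definition Good' (j : nat * list (list nat)) (N : R -> R) : Prop :=
  morse_gauge N /\ ((exists N', Good j N') -> Good j N).
Definition Gj (j : nat * list (list nat)) : R -> R := epsilon (inhabits (fun _ : R => 0)) (Good' j).

Lemma Gj_spec j : Good' j (Gj j).
Proof.
  unfold Gj. apply epsilon_spec.
  destruct (classic (exists N', Good j N')) as [[N' HN]|HN].
  - exists N'. split; [apply HN|auto].
  - exists (fun _ => 0). split; [apply gauge_zero|]. intro; contradiction.
Qed.

Definition Ms' (n : nat) : R -> R := Gj (Enc.dec n).
Fixpoint Ms (n : nat) : R -> R :=
  match n with
  | O => Ms' O
  | Datatypes.S n' => fun x => Rmax (Ms n' x) (Ms' (Datatypes.S n') x)
  end.

Lemma Ms_gauge n : morse_gauge (Ms n).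
Proof.
  induction n; simpl.
  - apply (proj1 (Gj_spec _)).
  - apply gauge_max; auto. apply (proj1 (Gj_spec _)).
Qed.

Lemma Ms'_le n x : Ms' n x <= Ms n x.
Proof. destruct n; simpl; [lra|apply Rmax_r]. Qed.

Hypothesis Hgen : generates G S.
Hypothesis HML : MLTG dd.

Lemma key (M : R -> R) : morse_gauge M -> exists j, forall gam, geod_ray dd x0 gam ->
  morse_cond dd M ray_dom gam -> morse_cond dd (Gj j) ray_dom gam.
Proof.
  intro HMg.
  destruct (HML 1 M (Rle_refl 1) HMg) as [L [Q' [M' [HL [HQ' [HM' Hloc]]]]]].
  destruct (floor_nat (L + 1) ltac:(lra)) as [k0 [Hk1 Hk2]].
  set (k := Datatypes.S (Datatypes.S k0)).
  set (P := fun tau => exists gam2 n', geod_ray dd x0 gam2 /\ morse_cond dd M ray_dom gam2 /\ wtype G S gam2 n' k = tau).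
  set (A := filter (fun tau => if excluded_middle_informative (P tau) then true else false) (all_codes (2 * length S) k)).
  exists (k, A).
  assert (HG : Good (k, A) M').
  { split; auto. intros gam Hg Hphi.
    assert (Hq : morse_qgeod dd M' Q' ray_dom gam).
    { apply Hloc.
      - intros a b c Ha Hc Hb. unfold ray_dom in *. lra.
      - intros s t Hs Ht Hst HtL. unfold ray_dom in Hs, Ht. split.
        + apply gr_qgeod1; auto.
        + destruct (floor_nat s Hs) as [n [Hn1 Hn2]].
          pose proof (Hphi n) as Hin. simpl in Hin. unfold A in Hin. apply filter_In in Hin.
          destruct Hin as [_ Hin]. destruct (excluded_middle_informative (P (wtype G S gam n k))) as [Hp|]; [|discriminate].
          destruct Hp as [gam2 [n' [Hg2 [Hm2 Hw]]]].
          apply (morse_transfer G S Hgen M gam gam2 (m (vt G S (gam (INR n))) (inv (vt G S (gam2 (INR n')))))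
                   (INR n' - INR n) (INR n) (INR n + INR k)); auto.
          * intros w Hw' Q.
            replace w with (INR n + (w - INR n)) at 1 by ring.
            replace (w + (INR n' - INR n)) with (INR n' + (w - INR n)) by ring.
            apply (window_d G S Hgen gam gam2 n n' (Datatypes.S k0)); [auto|auto|symmetry; exact Hw|]. fold k. lra.
          * pose proof (pos_INR n'). lra.
          * unfold k. rewrite !S_INR. lra. }
    apply Hq. }
  destruct (Gj_spec (k, A)) as [_ Hs]. specialize (Hs (ex_intro _ M' HG)).
  intros gam Hg Hm. apply (proj2 Hs gam Hg).
  intro n. simpl. unfold A. apply filter_In. split.
  - apply (wtype_in G S Hgen gam Hg).
  - destruct (excluded_middle_informative (P (wtype G S gam n k))) as [|Hn]; auto.
    exfalso. apply Hn. exists gam, n. auto.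
Qed.
End Main.

Theorem theorem4p3 (G : group) (S : list G) :
  generates G S ->
  MLTG (@cay_d G S) ->
  strongly_sigma_compact (@cay_d G S) (cay_base G S).
Proof.
  intros Hgen HML.
  assert (K4 : forall M, morse_gauge M -> exists n, forall gam, morse_ray (@cay_d G S) (cay_base G S) gam ->
        in_stratum (@cay_d G S) (cay_base G S) M gam -> in_stratum (@cay_d G S) (cay_base G S) (Ms G S n) gam).
  { intros M HM. destruct (key G S Hgen HML M HM) as [j Hj]. destruct (Enc.dec_surj j) as [n Hn].
    exists n. intros gam _ [gam' [Hg' [Hm' Hb]]]. exists gam'. split; auto. split; auto.
    apply (morse_mono _ _ (Gj G S j)).
    - intro x. pose proof (Ms'_le G S n x). unfold Ms' in H. rewrite Hn in H. exact H.
    - apply Hj; auto. }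
  exists (Ms G S). split; [|split; [|split]].
  - apply Ms_gauge.
  - intros n x _. simpl. apply Rmax_l.
  - intros gam Hr. destruct Hr as [Hg [M [HM Hc]]].
    destruct (K4 M HM) as [n Hn]. exists n. apply Hn.
    + split; auto. exists M; auto.
    + exists gam. split; auto. split; auto. exists 0. split.
      * intros s Hs. exists s. split; auto. rewrite (proj2 Hg) by auto. rewrite Rminus_diag, Rabs_R0. lra.
      * intros s Hs. exists s. split; auto. rewrite (proj2 Hg) by auto. rewrite Rminus_diag, Rabs_R0. lra.
  - exact K4.
Qed.
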